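(* Let $X$ be the compact symplectic toric manifold determined by a moment polytope $P\subset\mathbb{R}^n$. If the toric fiber $L(\mathbf{u})$ over an interior point $\mathbf{u}$ of $P$ is bulk-balanced, then $L(\mathbf{u})$ is strongly bulk-balanced.
   Context: $P=\bigcap_{j=1}^m\{\mathbf{u}:\ell_j(\mathbf{u})\ge0\}$, $\ell_j(\mathbf{u})=\langle\mathbf{u},\mathbf{v}_j\rangle-\lambda_j$, with $\mathbf{v}_j\in\mathbb{Z}^n$ primitive inward facet normals and non-redundant half-spaces. $L(\mathbf{u})$ is the Lagrangian torus fiber over $\mathbf{u}$. Leading term equations: for $\mathbf{u}\in\mathrm{Int}(P)$ let $S_1<S_2<\cdots$ be the distinct values of $\ell_j(\mathbf{u})$, $I_l=\{j:\ell_j(\mathbf{u})=S_l\}$, $A_l^\perp=\mathrm{span}_\mathbb{R}\{\mathbf{v}_j: j\in I_1\cup\dots\cup I_l\}$, $d_l=\dim A^\perp_l-\dim A^\perp_{l-1}$, $\kappa$ minimal with $A^\perp_\kappa=\mathbb{R}^n$. Choose $e^*_{r,s}\in\mathbb{Q}^n$ ($1\le r\le\kappa$, $1\le s\le d_r$) so that $\{e^*_{r,s}:r\le l\}$ is a $\mathbb{Q}$-basis of $A_l^\perp\cap\mathbb{Q}^n$ for each $l$ and each $\mathbf{v}_j\in\bigoplus\mathbb{Z}e^*_{r,s}$; write $\mathbf{y}^{\mathbf{v}_j}=\prod y_{r,s}^{v_j^{r,s}}$ where $\mathbf{v}_j=\sum v_j^{r,s}e^*_{r,s}$. For $c\in(\mathbb{C}^*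 )^m$ let $F_l^c=\sum_{j\in I_l}c_j\mathbf{y}^{\mathbf{v}_j}$; the generalized leading term equation is $y_{l,s}\partial F^c_l/\partial y_{l,s}=0$ ($1\le l\le\kappa$, $1\le s\le d_l$), and for $c=(1,\dots,1)$ it is called the leading term equation at $\mathbf{u}$ of $P$. (Solvability in $(\mathbb{C}^* )^n$ is independent of the choice of $e^*_{r,s}$.) $L(\mathbf{u})$ is strongly bulk-balanced if for some $c\in(\mathbb{C}^* )^m$ the generalized leading term equation at $\mathbf{u}$ of $P$ has a solution in $(\mathbb{C}^* )^n$. $L(\mathbf{u})$ is bulk-balanced if there is a sequence of triples $(\omega^{(i)},P^{(i)},\mathbf{u}^{(i)})$ such that: each $P^{(i)}$ is a polytope with the same normal fan as $P$ and $\omega^{(i)}$ the corresponding torus-invariant symplectic form on the same complex toric manifold, with $\omega^{(i)}\to\omega$; $P^{(i)}\to P$ in Hausdorff distance; $\mathbf{u}^{(i)}\in\mathrm{Int}(P^{(i)})$, $\mathbf{u}^{(i)}\to\mathbf{u}$; and for each $i$ the leading term equation at $\mathbf{u}^{(i)}$ of $P^{(i)}$ has a solution in $(\mathbb{C}^* )^n$. *)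

(* Defs.v *)
From HB Require Import structures.
From mathcomp Require Import all_boot all_order all_algebra.
From mathcomp Require Import reals.
From mathcomp Require Import complex.
Set Implicit Arguments.
Unset Strict Implicit.
Unset Printing Implicit Defensive.
Import Order.TTheory GRing.Theory Num.Theory.
Local Open Scope ring_scope.

Section Toric.
Variable R : realType.
Variables (n m : nat).

Definition ell (v : 'I_m -> 'I_n -> int) (lam : 'I_m -> R) (j : 'I_m)
  (u : 'I_n -> R) : R :=
  \sum_(k < n) u k * (v j k)%:~R - lam j.

Definition inP v lam (u : 'I_n -> R) := forall j, 0 <= ell v lam j u.
Definition inInt v lam (u : 'I_n -> R) := forall j, 0 < ell v lam j u.

Definition primitive_normals (v : 'I_m -> 'I_n -> int) :=
  forall j (d : int), (forall k, (d %| v j k)%Z) -> d = 1 \/ d = -1.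

Definition nonredundant v (lam : 'I_m -> R) :=
  forall j, exists u : 'I_n -> R,
    (forall i, i != j -> 0 <= ell v lam i u) /\ ell v lam j u < 0.

Definition bounded_P v (lam : 'I_m -> R) :=
  exists M : R, forall u, inP v lam u -> forall k, `|u k| <= M.

Definition is_polytope v (lam : 'I_m -> R) :=
  [/\ primitive_normals v, nonredundant v lam, bounded_P v lam
    & exists u, inInt v lam u].

Definition vmat (v : 'I_m -> 'I_n -> int) : 'M[rat]_(m, n) :=
  \matrix_(j, k) (v j k)%:~R.

Definition active_mat v lam (u : 'I_n -> R) : 'M[rat]_(m, n) :=
  \matrix_(j, k) (if ell v lam j u == 0 then (v j k)%:~R else 0).

(* Delzant condition: at each vertex exactly n facets meet and their normals
   form a Z-basis of Z^n *)
Definition delzant v (lam : 'I_m -> R) :=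
  forall u, inP v lam u -> \rank (active_mat v lam u) = n ->
    exists f : 'I_n -> 'I_m,
      [/\ injective f,
          (forall j, ell v lam j u = 0 <-> exists a, f a = j)
        & \det (\matrix_(a, b) v (f a) b) = 1 \/
          \det (\matrix_(a, b) v (f a) b) = -1].

Definition moment_polytope v (lam : 'I_m -> R) :=
  is_polytope v lam /\ delzant v lam.

(* Generalized leading term equation at u of P with coefficients c has a
   solution in (C^* )^n.  The adapted basis {e*_{r,s}} is encoded as the rows
   e_k (k : 'I_n) of a rational matrix e together with the value
   sigma k = S_r of the level r of e_k; the conditions say that for each
   level value t = S_l, the e_k with sigma k <= t form a Q-basis of
   A_l^perp /\ Q^n = Q-span {v_j : ell_j(u) <= t}; a j k are the (integer)
   coordinates of v_j in this basis, and the equation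
   y_{l,s} d/dy_{l,s} F_l^c = 0 for the basis vector k reads
   sum_{j in I_l} c_j a_{jk} y^{v_j} = 0. *)
Definition lte_solvable v lam (u : 'I_n -> R) (c : 'I_m -> R[i]) :=
  exists (sigma : 'I_n -> R) (e : 'M[rat]_n) (a : 'I_m -> 'I_n -> int)
         (y : 'I_n -> R[i]),
  [/\ forall k, exists j, sigma k = ell v lam j u,
      forall j0, let t := ell v lam j0 u in
        \rank (\matrix_(k < n) (if (sigma k <= t)%R then row k e else 0))
          = #|[set k : 'I_n | sigma k <= t]|
        /\ (\matrix_(k < n) (if (sigma k <= t)%R then row k e else 0) ==
            \matrix_(j < m) (if (ell v lam j u <= t)%R then row j (vmat v) else 0))%MS,
      forall j, row j (vmat v) = \sum_(k < n) (a j k)%:~R *: row k e,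
      forall k, y k != 0
    & forall k,
        \sum_(j < m | ell v lam j u == sigma k)
           c j * (a j k)%:~R * \prod_(k' < n) (y k' ^ a j k') = 0].

Definition strongly_bulk_balanced v lam (u : 'I_n -> R) :=
  exists c : 'I_m -> R[i], (forall j, c j != 0) /\ lte_solvable v lam u c.

Definition same_normal_fan v (lam lam' : 'I_m -> R) :=
  forall I : {set 'I_m},
    (exists u, inP v lam u /\ forall j, j \in I -> ell v lam j u = 0) <->
    (exists u, inP v lam' u /\ forall j, j \in I -> ell v lam' j u = 0).

Definition hausdorff_cvg v (lams : nat -> 'I_m -> R) (lam : 'I_m -> R) :=
  forall eps : R, 0 < eps -> exists N : nat, forall i : nat, (N <= i)%N ->
    (forall x, inP v (lams i) x ->
       exists y, inP v lam y /\ forall k, `|x k - y k| < eps) /\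
    (forall y, inP v lam y ->
       exists x, inP v (lams i) x /\ forall k, `|x k - y k| < eps).

Definition bulk_balanced v lam (u : 'I_n -> R) :=
  exists (lams : nat -> 'I_m -> R) (us : nat -> 'I_n -> R),
  [/\ forall i, is_polytope v (lams i) /\ same_normal_fan v lam (lams i),
      (* omega^(i) -> omega : the parameters of the symplectic forms converge *)
      forall j (eps : R), 0 < eps -> exists N : nat, forall i : nat, (N <= i)%N ->
        `|lams i j - lam j| < eps,
      hausdorff_cvg v lams lam,
      forall k (eps : R), 0 < eps -> exists N : nat, forall i : nat, (N <= i)%N ->
        `|us i k - u k| < eps
    & forall i, inInt v (lams i) (us i) /\ lte_solvable v (lams i) (us i) (fun _ => 1)].

End Toric.

(* Main.v *)
Require Import Defs.
From HB Require Import structures.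
From mathcomp Require Import all_boot all_order all_algebra.
From mathcomp Require Import reals complex.
From mathcomp Require Import ring lra.
Set Implicit Arguments.
Unset Strict Implicit.
Unset Printing Implicit Defensive.
Import Order.TTheory GRing.Theory Num.Theory.
Local Open Scope ring_scope.



Section Core.
Variables (R : realFieldType) (C : numFieldType) (m n : nat).
Variables (f : 'I_m -> R) (g : 'I_m -> R) (sigma : 'I_n -> R) (w : 'I_n -> 'I_m).
Variables (A : 'I_m -> 'I_n -> C) (Y : 'I_m -> C).
Hypothesis hsig : forall k, sigma k = f (w k).
Hypothesis hfg : forall j j', f j = f j' -> g j = g j'.
Hypothesis ha : forall j k, f j < sigma k -> A j k = 0.
Hypothesis hsurj : forall j0 (r : 'I_n -> C), exists x : 'I_m -> C,
  (forall j, f j != f j0 -> x j = 0) /\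
  forall k, sigma k = f j0 -> \sum_j x j * A j k = r k.
Hypothesis hY : forall j, Y j != 0.
Hypothesis hfine : forall k, \sum_(j | f j == sigma k) A j k * Y j = 0.

Definition EQk (z : 'I_m -> C) k := \sum_(j | g j == g (w k)) z j * A j k = 0.

Lemma avoid (x : 'I_m -> C) : exists b : C, forall j, x j + b * Y j != 0.
Proof.
exists (1 + \sum_j `|x j / Y j|).
move=> j; apply/eqP => H.
have E : x j / Y j = - (1 + \sum_j `|x j / Y j|).
  apply: (mulIf (hY j)); rewrite mulfVK ?hY //.
  by move/eqP: H; rewrite addr_eq0 mulNr => /eqP.
have hs : 0 <= \sum_j `|x j / Y j| by apply: sumr_ge0 => i _.
have : `|x j / Y j| <= \sum_j `|x j / Y j|.
  by rewrite (bigD1 j) //= lerDl; apply: sumr_ge0.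
rewrite E normrN ger0_norm; last by rewrite addr_ge0.
by rewrite gerDr ler10.
Qed.


Lemma gsum_x (x : 'I_m -> C) k : (forall j, f j != sigma k -> x j = 0) ->
  \sum_(j | g j == g (w k)) x j * A j k = \sum_j x j * A j k.
Proof.
move=> hx; rewrite [RHS](bigID (fun j => g j == g (w k))) /= [X in _ = _ + X]big1 ?addr0 //.
move=> j hj; rewrite hx ?mul0r //; apply: contra hj => /eqP e.
by apply/eqP; apply: hfg; rewrite e hsig.
Qed.

Lemma step N : forall s : R, (#|[set j | (s < f j)%R]| <= N)%N -> exists z : 'I_m -> C,
  [/\ forall j, s < f j -> z j != 0, forall j, f j <= s -> z j = 0 &
      forall k, s < sigma k -> EQk z k].
Proof.
elim: N => [|N IH] s hc; case: (pickP (fun j => s < f j)) => [j0 hj0|hnone].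
- by move: hc; rewrite leqn0 => /eqP/cards0_eq/setP/(_ j0); rewrite inE hj0 inE.
- exists (fun _ => 0); split => //; first by move=> j; rewrite hnone.
  by move=> k; rewrite hsig hnone.
- case: (@arg_minP _ _ _ j0 (fun j => s < f j) f hj0) => j1 hsj1 hmin.
  have hc1 : (#|[set j | (f j1 < f j)%R]| <= N)%N.
    have sub : [set j | f j1 < f j] \subset [set j | s < f j] :\ j1.
      apply/subsetP => j; rewrite !inE => h; rewrite (lt_trans hsj1 h) andbT.
      by apply: contraTneq h => ->; rewrite ltxx.
    apply: (leq_trans (subset_leq_card sub)).
    move: hc; rewrite (cardsD1 j1) inE hsj1 /= add1n ltnS; exact.
  have [z' [hz1 hz2 hz3]] := IH _ hc1.
  pose r k := - \sum_(j | g j == g (w k)) z' j * A j k.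
  have [x [hx1 hx2]] := hsurj j1 r.
  have [b hb] := avoid x.
  exists (fun j => z' j + x j + (if f j == f j1 then b * Y j else 0)); split.
  + move=> j hj; have := hmin j hj; rewrite le_eqVlt => /orP[/eqP e|lt].
    * by rewrite -e eqxx hz2 -?e // add0r.
    * rewrite hx1 ?(gt_eqF lt) // addr0 addr0; exact: hz1.
  + move=> j hj; have ne : f j != f j1 by apply: contraTneq hj => ->; rewrite -ltNge.
    have -> : z' j = 0 by apply: hz2; apply: (le_trans hj); apply: ltW.
    by rewrite (hx1 j ne) (negbTE ne) !addr0.
  + move=> k hk; rewrite /EQk.
    under eq_bigr do rewrite !mulrDl.
    rewrite !big_split /=.
    have le1 : f j1 <= sigma k by rewrite hsig; apply: hmin; rewrite -hsig.
    move: le1; rewrite le_eqVlt => /orP[/eqP e|lt].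
    * rewrite (gsum_x (x := x)); last by move=> j hj; apply: hx1; rewrite e.
      rewrite hx2 -?e // /r addrN add0r.
      rewrite (gsum_x (x := fun j => if f j == f j1 then b * Y j else 0)); last first.
        by move=> j hj; rewrite e ifN.
      rewrite (bigID (fun j => f j == f j1)) /= [X in _ + X]big1 ?addr0; last first.
        by move=> j /negbTE ->; rewrite mul0r.
      under eq_bigr => j hj do rewrite hj -mulrA.
      rewrite -mulr_sumr e.
      under eq_bigr do rewrite mulrC.
      by rewrite hfine mulr0.
    * rewrite hz3 ?(lt_trans hsj1 lt) // add0r.
      rewrite big1 ?add0r; last first.
        move=> j _; have [e|ne] := eqVneq (f j) (f j1); first by rewrite ha ?mulr0 // e.
        by rewrite hx1 // mul0r.
      apply: big1 => j _; case: eqP => [e|]; last by rewrite mul0r.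
      by rewrite ha ?mulr0 // e.
- exists (fun _ => 0); split => //; first by move=> j; rewrite hnone.
  by move=> k; rewrite hsig hnone.
Qed.

Lemma core : exists z : 'I_m -> C, (forall j, z j != 0) /\ forall k, EQk z k.
Proof.
pose s := - (1 + \sum_j `|f j|).
have hs : forall j, s < f j.
  move=> j; have h1 : `|f j| <= \sum_j `|f j|.
    by rewrite (bigD1 j) //= lerDl; apply: sumr_ge0.
  rewrite /s ltrNl; apply: le_lt_trans (ler_norm _) _; rewrite normrN.
  by apply: le_lt_trans h1 _; rewrite ltrDr ltr01.
have [z [h1 _ h3]] := @step m s (leq_trans (max_card _) (eq_leq (card_ord m))).
by exists z; split => [j|k]; [apply: h1 | apply: h3; rewrite hsig].
Qed.

End Core.


Section Lin.
Variables (R : realFieldType) (m n : nat).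
Variables (f : 'I_m -> R) (sigma : 'I_n -> R) (e : 'M[rat]_n)
  (a : 'I_m -> 'I_n -> int) (V : 'M[rat]_(m, n)).
Hypothesis H1 : forall k, exists j, sigma k = f j.
Hypothesis H2 : forall j0, let t := f j0 in
        \rank (\matrix_(k < n) (if (sigma k <= t)%R then row k e else 0))
          = #|[set k : 'I_n | sigma k <= t]|
        /\ (\matrix_(k < n) (if (sigma k <= t)%R then row k e else 0) ==
            \matrix_(j < m) (if (f j <= t)%R then row j V else 0))%MS.
Hypothesis H3 : forall j, row j V = \sum_(k < n) (a j k)%:~R *: row k e.

Definition Aq : 'M[rat]_(m, n) := \matrix_(j, k) (a j k)%:~R.
Definition dmask (t : R) : 'rV[rat]_n := \row_k (if sigma k <= t then 1 else 0).

Lemma Et_diag t : \matrix_(k < n) (if (sigma k <= t)%R then row k e else 0) =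
  diag_mx (dmask t) *m e.
Proof.
apply/matrixP => k l; rewrite mul_diag_mx !mxE.
by case: ifP; rewrite ?mxE ?mul1r ?mul0r.
Qed.

Lemma VAe : V = Aq *m e.
Proof.
apply/row_matrixP => j; rewrite row_mul H3 mulmx_sum_row.
by apply: eq_bigr => k _; rewrite !mxE.
Qed.

Lemma efree (j0 : 'I_m) : row_free e.
Proof.
pose jm := [arg max_(j > j0) f j]%O.
have hm : forall j, f j <= f jm.
  by move=> j; rewrite /jm; case: arg_maxP => // i _ h; apply: h.
have [hr _] := H2 jm.
have E : \matrix_(k < n) (if (sigma k <= f jm)%R then row k e else 0) = e.
  apply/row_matrixP => k; rewrite rowK.
  by have [j ->] := H1 k; rewrite hm.
have S : [set k : 'I_n | sigma k <= f jm] = setT.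
  by apply/setP => k; rewrite !inE; have [j ->] := H1 k; rewrite hm.
apply/eqP; transitivity #|[set k : 'I_n | sigma k <= f jm]|; first by rewrite -hr E.
by rewrite S cardsT card_ord.
Qed.

Lemma fact_a j k : f j < sigma k -> a j k = 0.
Proof.
move=> hlt; have [_ /andP [_ hVE]] := H2 j.
have hrow : (row j V <= \matrix_(k < n) (if (sigma k <= f j)%R then row k e else 0))%MS.
  apply: submx_trans hVE.
  have -> : row j V = row j (\matrix_(j0 < m) (if (f j0 <= f j)%R then row j0 V else 0)).
    by rewrite rowK lexx.
  exact: row_sub.
move/submxP: hrow => [x hx].
rewrite Et_diag mulmxA in hx. rewrite VAe row_mul in hx.
have := row_free_inj (efree j) hx.
move/matrixP/(_ 0 k); rewrite mul_mx_diag !mxE.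
by rewrite leNgt hlt mulr0 => /eqP; rewrite intr_eq0 => /eqP.
Qed.

Lemma fact_b (j0 : 'I_m) : exists X : 'M[rat]_(n, m),
  (forall k j, f j != f j0 -> X k j = 0) /\
  forall k0 k, sigma k = f j0 -> sigma k0 = f j0 ->
    \sum_j X k0 j * (a j k)%:~R = (k0 == k)%:R.
Proof.
set s := f j0.
pose PJ : 'M[rat]_m := diag_mx (\row_j (if f j == s then 1 else 0)).
pose PK : 'M[rat]_n := diag_mx (\row_k (if sigma k == s then 1 else 0)).
pose B := PJ *m Aq *m PK.
have HB : forall j k, B j k = (if f j == s then 1 else 0) * (a j k)%:~R *
                              (if sigma k == s then 1 else 0).
  by move=> j k; rewrite /B mul_mx_diag mul_diag_mx !mxE.
have sub : (PK <= B)%MS.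
  rewrite submxE; set Phi := cokermx B.
  have hBP : B *m Phi = 0 by apply: mulmx_coker.
  pose L := PK *m Phi.
  have ue : e \in unitmx by rewrite -row_free_unit; apply: (efree j0).
  pose Psi := invmx e *m L.
  have ePsi : e *m Psi = L by rewrite /Psi mulKVmx.
  have [_ /andP [hEV _]] := H2 j0.
  have hV : \matrix_(j < m) (if (f j <= s)%R then row j V else 0) *m Psi = 0.
    apply/row_matrixP => j; rewrite row_mul rowK row0.
    case: ifP => hj; last by rewrite mul0mx.
    rewrite VAe row_mul -mulmxA ePsi /L mulmxA.
    have -> : row j Aq *m PK = row j B.
      apply/rowP => k; rewrite mul_mx_diag mxE [row j B _ _]mxE HB !mxE.
      move: hj; rewrite le_eqVlt => /orP[/eqP ->|hlt]; first by rewrite eqxx mul1r.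
      case: eqP => hk; last by rewrite !mulr0.
      by rewrite fact_a ?hk // !mulr0 mul0r.
    by rewrite -row_mul hBP row0.
  move/submxP: hEV => [Z hZ].
  have hE : diag_mx (dmask s) *m L = 0.
    by rewrite -ePsi mulmxA -Et_diag hZ -mulmxA hV mulmx0.
  apply/eqP/matrixP => k l; rewrite mxE.
  have := congr1 (fun M : 'M[rat]_n => M k l) hE; rewrite mul_diag_mx !mxE /=.
  have [hk|hk] := eqVneq (sigma k) s; first by rewrite hk lexx mul1r.
  move=> _; apply: big1 => j _; rewrite /PK !mxE (negbTE hk).
  by rewrite mul0rn mul0r.
move/submxP: sub => [X0 hX0].
exists (X0 *m PJ); split.
  by move=> k j hj; rewrite mul_mx_diag !mxE (negbTE hj) mulr0.
move=> k0 k hk hk0.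
have := congr1 (fun M : 'M[rat]_n => M k0 k) hX0.
rewrite /PK [diag_mx _ _ _]mxE mxE hk0 eqxx => ->.
rewrite [RHS]mxE; apply: eq_bigr => j _.
by rewrite HB mul_mx_diag !mxE hk eqxx mulr1 mulrA.
Qed.
End Lin.
Definition ev (P : nat -> Prop) := exists N, forall i, (N <= i)%N -> P i.

Lemma ev_and P Q : ev P -> ev Q -> ev (fun i => P i /\ Q i).
Proof.
move=> [N1 h1] [N2 h2]; exists (maxn N1 N2) => i hi; split.
  by apply: h1; apply: leq_trans hi; apply: leq_maxl.
by apply: h2; apply: leq_trans hi; apply: leq_maxr.
Qed.

Lemma ev_imp (P Q : nat -> Prop) : (forall i, P i -> Q i) -> ev P -> ev Q.
Proof. by move=> h [N hN]; exists N => i /hN /h. Qed.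

Lemma ev_forall (T : finType) (P : T -> nat -> Prop) :
  (forall x, ev (P x)) -> ev (fun i => forall x, P x i).
Proof.
move=> h.
have : forall s : seq T, ev (fun i => forall x, x \in s -> P x i).
  elim => [|y s IH]; first by exists 0%N.
  apply: ev_imp (ev_and (h y) IH) => i [h1 h2] x; rewrite inE => /orP[/eqP ->|]//.
  exact: h2.
move/(_ (enum T)); apply: ev_imp => i hi x; apply: hi; by rewrite mem_enum.
Qed.

Lemma ell_cvg (R : realType) n m (v : 'I_m -> 'I_n -> int) lam u
  (lams : nat -> 'I_m -> R) (us : nat -> 'I_n -> R) :
  (forall j (eps : R), 0 < eps -> exists N : nat, forall i : nat, (N <= i)%N ->
        `|lams i j - lam j| < eps) ->
  (forall k (eps : R), 0 < eps -> exists N : nat, forall i : nat, (N <= i)%N ->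
        `|us i k - u k| < eps) ->
  forall j (eps : R), 0 < eps ->
   ev (fun i => `|ell v (lams i) j (us i) - ell v lam j u| < eps).
Proof.
move=> hl hu j eps he.
pose M := 1 + \sum_k `|(v j k)%:~R : R|.
have hM : 0 < M by rewrite ltr_pwDl // sumr_ge0.
pose d := eps / 2 / M.
have hd : 0 < d by rewrite divr_gt0 // divr_gt0.
have h1 : ev (fun i => forall k, `|us i k - u k| < d).
  by apply: ev_forall => k; apply: hu.
have h2 : ev (fun i => `|lams i j - lam j| < eps / 2).
  by apply: hl; rewrite divr_gt0.
apply: ev_imp (ev_and h1 h2) => i [hk hj].
have -> : ell v (lams i) j (us i) - ell v lam j u =
   \sum_k (us i k - u k) * (v j k)%:~R - (lams i j - lam j).
  rewrite /ell; under [X in _ = X - _]eq_bigr do rewrite mulrBl.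
  rewrite sumrB; ring.
apply: le_lt_trans (ler_normB _ _) _.
rewrite [eps](splitr eps) ler_ltD //.
apply: le_trans (ler_norm_sum _ _ _) _.
apply: (@le_trans _ _ (\sum_k d * `|(v j k)%:~R : R|)).
  apply: ler_sum => k _; rewrite normrM ler_wpM2r //; exact: ltW.
rewrite -mulr_sumr.
have : d * M = eps / 2 by rewrite /d mulfVK // gt_eqF.
move=> <-; rewrite ler_wpM2l ?ltW //. by rewrite /M -subr_gt0 addrK ltr01.
Qed.
Unset Implicit Arguments.

Theorem theoremB (R : realType) (n m : nat) (v : 'I_m -> 'I_n -> int)
  (lam : 'I_m -> R) (u : 'I_n -> R) :
  moment_polytope v lam -> inInt v lam u ->
  bulk_balanced v lam u -> strongly_bulk_balanced v lam u.
Proof.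
move=> _ _ [lams [us [_ Hlam _ Hus Hlte]]].
pose g j := ell v lam j u.
have Hev : ev (fun i => forall p : 'I_m * 'I_m, g p.1 < g p.2 ->
            ell v (lams i) p.1 (us i) < ell v (lams i) p.2 (us i)).
  apply: ev_forall => [[j j']] /=.
  have [hlt|hge] := ltP (g j) (g j'); last by exists 0%N => i _ /=.
  pose eps := (g j' - g j) / 2.
  have he : 0 < eps by rewrite divr_gt0 // subr_gt0.
  have c1 := @ell_cvg R n m v lam u lams us Hlam Hus j eps he.
  have c2 := @ell_cvg R n m v lam u lams us Hlam Hus j' eps he.
  apply: ev_imp (ev_and c1 c2).
  move=> i [h1 h2] _ /=.
  move: h1 h2; rewrite !ltr_norml => /andP[_ h1] /andP[h2 _].
  rewrite /eps in h1 h2 *; rewrite /g in h1 h2 hlt *; lra.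
have [N HN] := Hev.
have ord := HN N (leqnn N).
pose f j := ell v (lams N) j (us N).
have ordf : forall j j', g j < g j' -> f j < f j' by move=> j j' h; apply: (ord (j, j')).
have hfg : forall j j', f j = f j' -> g j = g j'.
  move=> j j' e; have [h|h|//] := ltgtP (g j) (g j').
    by have := ordf _ _ h; rewrite e ltxx.
  by have := ordf _ _ h; rewrite e ltxx.
have [_ [sig [e [a [y [F1 F2 F3 F4 F5]]]]]] := Hlte N.
have ex : forall k, exists j, sig k == f j.
  by move=> k; have [j hj] := F1 k; exists j; apply/eqP.
pose w k := xchoose (ex k).
have hw : forall k, sig k = f (w k) by move=> k; apply/eqP; apply: (xchooseP (ex k)).
pose Y j := \prod_(k' < n) (y k' ^ a j k') : R[i].
have hY : forall j, Y j != 0.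
  by move=> j; rewrite prodf_seq_neq0; apply/allP => k' _; apply: expfz_neq0.
have H2 := F2; have H3 := F3.
have [z [hz1 hz2]] : exists z : 'I_m -> R[i], (forall j, z j != 0) /\
     forall k, EQk g w (fun j k => (a j k)%:~R) z k.
  apply: (@core R _ m n f g sig w _ Y hw hfg _ _ hY).
  - move=> j k hlt; rewrite (@fact_a R m n f sig e a (vmat v) F1 F2 F3 j k hlt).
    by [].
  - move=> j0 r.
    have [X [hX1 hX2]] := @fact_b R m n f sig e a (vmat v) F1 F2 F3 j0.
    exists (fun j => \sum_(k0 | sig k0 == f j0) r k0 * ratr (X k0 j)); split.
      by move=> j hj; apply: big1 => k0 _; rewrite hX1 // rmorph0 mulr0.
    move=> k hk.
    under eq_bigr do rewrite mulr_suml.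
    rewrite exchange_big /=.
    rewrite (bigD1 k) /=; last by rewrite hk.
    rewrite [X in _ + X]big1 ?addr0; last first.
      move=> k0 /andP[hk0 hne].
      under eq_bigr do rewrite -mulrA -(ratr_int _ (a _ k)) -rmorphM.
      rewrite -mulr_sumr -rmorph_sum hX2 //; last by apply/eqP.
      by rewrite (negbTE hne) rmorph0 mulr0.
    under eq_bigr do rewrite -mulrA -(ratr_int _ (a _ k)) -rmorphM.
    by rewrite -mulr_sumr -rmorph_sum hX2 // eqxx rmorph1 mulr1.
  - move=> k; have := F5 k.
    by under eq_bigr do rewrite mul1r.
exists (fun j => z j / Y j); split.
  by move=> j; rewrite mulf_neq0 ?invr_eq0.
exists (fun k => g (w k)), e, a, y; split => //.
- by move=> k; exists (w k).
- move=> j0 /=.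
  pose js := [arg max_(j > j0 | g j <= g j0) f j]%O.
  have [hjs hmax] : g js <= g j0 /\ forall j, g j <= g j0 -> f j <= f js.
    by rewrite /js; case: arg_maxP => // i hi h; split => // j; apply: h.
  have key : forall j, (g j <= g j0) = (f j <= f js).
    move=> j; apply/idP/idP => [/hmax //|h].
    rewrite leNgt; apply/negP => hlt.
    have := ordf _ _ (le_lt_trans hjs hlt); rewrite ltNge h //.
  have EE : \matrix_(k < n) (if (g (w k) <= g j0)%R then row k e else 0) =
            \matrix_(k < n) (if (sig k <= f js)%R then row k e else 0).
    by apply/row_matrixP => k; rewrite !rowK hw key.
  have VV : \matrix_(j < m) (if (g j <= g j0)%R then row j (vmat v) else 0) =
            \matrix_(j < m) (if (f j <= f js)%R then row j (vmat v) else 0).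
    by apply/row_matrixP => j; rewrite !rowK key.
  have SS : [set k : 'I_n | g (w k) <= g j0] = [set k : 'I_n | sig k <= f js].
    by apply/setP => k; rewrite !inE hw key.
  have [r1 r2] := F2 js.
  rewrite /g in EE VV SS *.
  by rewrite EE VV SS; split.
- move=> k; have h := hz2 k; rewrite /EQk in h; rewrite -[RHS]h.
  apply: eq_bigr => j _; rewrite /Y.
  by rewrite mulrAC divfK //; apply: hY.
Qed.
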